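(* Fix an integer $n\ge 2$ and $\lambda>0$. For $\mu>0$ let $q(t)$, $t\ge 0$, be the continuous-time Markov chain on $\{0,1,\dots,n\}$ with $q(0)=0$ and transition rates: $j\to j+1$ at rate $\lambda$ for $0\le j\le n-1$; $j\to j-1$ at rate $\mu$ for $1\le j\le n-1$; the state $n$ is absorbing. Let $\tau=\inf\{t>0:\ q(t)=n\}$. Then, as $\mu\to\infty$ (with $\lambda$ and $n$ fixed), the random variable $(\lambda/\mu)^{n-1}\tau$ converges in distribution to an exponential random variable with parameter $\lambda$; that is, for every $t\ge 0$, $$\lim_{\mu\to\infty} P\big((\lambda/\mu)^{n-1}\tau>t\big)=e^{-\lambda t},$$ equivalently, for every $s\ge 0$, $\lim_{\mu\to\infty} E\, e^{-s(\lambda/\mu)^{n-1}\tau}=\frac{\lambda}{\lambda+s}$. Moreover, with $P_{n-1}(t)=P(q(t)=n-1,\ \tau>t)$ and $\varphi_{n-1}(s)=\int_0^\infty e^{-st}P_{n-1}(t)\,dt$, one has $\lambda P_{n-1}$ equal to the density of $\tau$ and $$\lim_{\mu\to\infty}\varphi_{n-1}\big((\lambda/\mu)^{n-1}s\big)=\frac{1}{\lambda+s}\quad (s\ge 0).$$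
   Context: Model interpretation: a system of $n$ identical elements, one working and the rest in reserve, with one repair device repairing one element at a time; working times are exponential with parameter $\lambda$, repair times exponential with parameter $\mu$, all independent. $q(t)$ is the number of broken elements at time $t$, and $\tau$ is the system failure time (all $n$ elements broken). *)

(* Defs.v *)
From Stdlib Require Import Reals Lra Lia.
Open Scope R_scope.

Definition up_rate (lam : R) (n j : nat) : R :=
  if Nat.ltb j n then lam else 0.
Definition down_rate (mu : R) (n j : nat) : R :=
  if andb (Nat.leb 1 j) (Nat.ltb j n) then mu else 0.

(* p j t = P(q(t) = j).  The state probabilities of a finite-state CTMC
   started at 0 are the (unique) solution of the Kolmogorov forward
   equations with initial distribution delta_0. *)
Definition kolmogorov_forward (lam mu : R) (n : nat) (p : nat -> R -> R) : Prop :=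
  (forall j, (j <= n)%nat -> p j 0 = if Nat.eqb j 0 then 1 else 0) /\
  (forall j t, (j <= n)%nat ->
     derivable_pt_lim (p j) t
       ((match j with 0%nat => 0 | S i => up_rate lam n i * p i t end)
        + down_rate mu n (S j) * p (S j) t
        - (up_rate lam n j + down_rate mu n j) * p j t)).

(* P(tau > t) = P(q(t) <> n) = sum_{j=0}^{n-1} p j t  (n is absorbing). *)
Definition survival (n : nat) (p : nat -> R -> R) (t : R) : R :=
  sum_f_R0 (fun j => p j t) (n - 1).

Definition scale (lam mu : R) (n : nat) : R := (lam / mu) ^ (n - 1).

Definition improper_int0 (f : R -> R) (l : R) : Prop :=
  exists pr : (forall b : R, Riemann_integrable f 0 b),
    forall eps, 0 < eps -> exists B, forall b, B <= b ->
      Rabs (RiemannInt (pr b) - l) < eps.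

Definition lim_mu_infty (g : R -> R) (l : R) : Prop :=
  forall eps, 0 < eps -> exists M, forall mu, M < mu -> Rabs (g mu - l) < eps.

(* Main.v *)
Require Import Defs.
From Stdlib Require Import Reals Lra Lia Bool FunctionalExtensionality.
Open Scope R_scope.

Fixpoint sumr (f : nat -> R) (m : nat) : R :=
  match m with O => 0 | S k => sumr f k + f k end.

Lemma sum_f_sumr f N : sum_f_R0 f N = sumr f (S N).
Proof. induction N; simpl. ring. rewrite IHN. simpl. ring. Qed.

Lemma sumr_ext f g m : (forall k, (k < m)%nat -> f k = g k) -> sumr f m = sumr g m.
Proof. induction m; intros H; simpl. reflexivity. rewrite IHm, H; auto. Qed.

Lemma sumr_plus f g m : sumr (fun k => f k + g k) m = sumr f m + sumr g m.
Proof. induction m; simpl. ring. rewrite IHm; ring. Qed.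

Lemma sumr_minus f g m : sumr (fun k => f k - g k) m = sumr f m - sumr g m.
Proof. induction m; simpl. ring. rewrite IHm; ring. Qed.

Lemma sumr_scal c f m : sumr (fun k => c * f k) m = c * sumr f m.
Proof. induction m; simpl. ring. rewrite IHm; ring. Qed.

Lemma sumr_le f g m : (forall k, (k < m)%nat -> f k <= g k) -> sumr f m <= sumr g m.
Proof. induction m; intros H; simpl. lra. assert (f m <= g m) by auto. assert (sumr f m <= sumr g m) by auto. lra. Qed.

Lemma sumr_nonneg f m : (forall k, (k < m)%nat -> 0 <= f k) -> 0 <= sumr f m.
Proof. induction m; intros H; simpl. lra. assert (0 <= f m) by auto. assert (0 <= sumr f m) by auto. lra. Qed.

Lemma sumr_abs f m : Rabs (sumr f m) <= sumr (fun k => Rabs (f k)) m.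
Proof. induction m; simpl. rewrite Rabs_R0; lra.
  eapply Rle_trans. apply Rabs_triang. lra. Qed.

Lemma sumr_bound f m b : (forall k, (k < m)%nat -> Rabs (f k) <= b) -> Rabs (sumr f m) <= INR m * b.
Proof. induction m; intros H; cbn [sumr]. simpl; rewrite Rabs_R0; lra.
  eapply Rle_trans. apply Rabs_triang. rewrite S_INR.
  assert (Rabs (f m) <= b) by auto. assert (Rabs (sumr f m) <= INR m * b) by auto. lra. Qed.

Lemma sumr_shift f m : sumr f (S m) = f O + sumr (fun k => f (S k)) m.
Proof. induction m. simpl; ring. change (sumr f (S (S m))) with (sumr f (S m) + f (S m)).
  rewrite IHm. simpl. ring. Qed.

Lemma sumr_mono f m1 m2 : (forall k, 0 <= f k) -> (m1 <= m2)%nat -> sumr f m1 <= sumr f m2.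
Proof. intros H Hm. induction Hm. lra. simpl. specialize (H m). lra. Qed.

Lemma sumr_term_le f m k : (forall k, (k < m)%nat -> 0 <= f k) -> (k < m)%nat -> f k <= sumr f m.
Proof. induction m; intros H Hk. lia. simpl. destruct (Nat.eq_dec k m). subst.
  assert (0 <= sumr f m) by (apply sumr_nonneg; auto). lra.
  assert (f k <= sumr f m) by (apply IHm; auto; lia). assert (0 <= f m) by auto. lra. Qed.

Definition Fm (F : nat -> R) (j : nat) : R := match j with O => 0 | S i => F i end.

Lemma SBP w F m : sumr (fun j => w j * (Fm F j - F j)) m
   = sumr (fun k => (w (S k) - w k) * F k) m - w m * Fm F m.
Proof. induction m; simpl. ring. rewrite IHm. destruct m; simpl; ring. Qed.

Lemma CS a m : (sumr a m)^2 <= INR m * sumr (fun k => a k ^ 2) m.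
Proof. induction m; cbn [sumr]. simpl; lra.
  set (S0 := sumr a m) in *. set (Q := sumr (fun k => a k ^ 2) m) in *.
  assert (HQ : 0 <= Q) by (apply sumr_nonneg; intros; apply pow2_ge_0).
  rewrite S_INR.
  assert (Hm : 0 <= INR m) by apply pos_INR.
  destruct (Req_dec (INR m) 0) as [H0|H0].
  - rewrite H0 in IHm. assert (S0 = 0) by nra. subst S0. rewrite H. nra.
  - assert (0 < INR m) by lra.
    assert (INR m * (Q + INR m * a m ^ 2 - 2 * S0 * a m) >= 0).
    { pose proof (pow2_ge_0 (S0 - INR m * a m)). assert (INR m * Q >= S0^2) by lra. nra. }
    assert (Q + INR m * a m ^ 2 - 2 * S0 * a m >= 0).
    { destruct (Rle_dec 0 (Q + INR m * a m ^ 2 - 2 * S0 * a m)). lra. nra. }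
    nra.
Qed.

Lemma tele_bound y M j : (j <= M)%nat -> Rabs (y j - y M) <= sumr (fun k => Rabs (y k - y (S k))) M.
Proof. induction M; intros H. assert (j = O) by lia. subst. replace (y O - y O) with 0 by ring.
  rewrite Rabs_R0. simpl; lra.
  destruct (Nat.eq_dec j (S M)). subst. replace (y (S M) - y (S M)) with 0 by ring.
  rewrite Rabs_R0. apply sumr_nonneg. intros; apply Rabs_pos.
  simpl. replace (y j - y (S M)) with ((y j - y M) + (y M - y (S M))) by ring.
  eapply Rle_trans. apply Rabs_triang. assert (Rabs (y j - y M) <= sumr (fun k => Rabs (y k - y (S k))) M) by (apply IHM; lia). lra. Qed.

Lemma sumr_deriv fs ds m t : (forall j, (j < m)%nat -> derivable_pt_lim (fs j) t (ds j)) ->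
  derivable_pt_lim (fun u => sumr (fun j => fs j u) m) t (sumr ds m).
Proof. induction m; intros H; simpl. apply derivable_pt_lim_const.
  apply (derivable_pt_lim_plus (fun u => sumr (fun j => fs j u) m) (fs m)); auto. Qed.

Lemma nonincr f f' a b : a <= b -> (forall c, a <= c <= b -> derivable_pt_lim f c (f' c)) ->
  (forall c, a <= c <= b -> f' c <= 0) -> f b <= f a.
Proof. intros Hab Hd Hn. destruct (Req_dec a b). subst; lra.
  destruct (MVT_cor2 f f' a b) as [c [Hc1 Hc2]]. lra. auto.
  assert (f' c <= 0) by (apply Hn; lra). nra. Qed.

Lemma FTC g G b (pr : Riemann_integrable g 0 b) :
  (forall t, derivable_pt_lim G t (g t)) -> continuity g -> RiemannInt pr = G b - G 0.
Proof. intros Hd Hc.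
  set (d0 := (fun x => exist _ (g x) (Hd x)) : derivable G).
  assert (Hc' : continuity (derive G d0)) by exact Hc.
  exact (FTC_Riemann {| c1 := G; diff0 := d0; cont1 := Hc' |} pr). Qed.

Definition Hyp (lam mu : R) (N : nat) (p : nat -> R -> R) : Prop :=
  0 < lam /\ 0 < mu /\ (1 <= N)%nat /\ kolmogorov_forward lam mu (S N) p.

Definition yv lam mu N (p : nat -> R -> R) j t := if Nat.leb j N then p j t / (lam/mu)^j else 0.
Definition flux lam mu N p k t := lam * (lam/mu)^k * (yv lam mu N p k t - yv lam mu N p (S k) t).

Lemma rho_pos lam mu : 0 < lam -> 0 < mu -> 0 < lam/mu.
Proof. intros; apply Rdiv_lt_0_compat; auto. Qed.

Lemma rhok_pos lam mu k : 0 < lam -> 0 < mu -> 0 < (lam/mu)^k.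
Proof. intros; apply pow_lt, rho_pos; auto. Qed.

Lemma yv_le lam mu N p j t : (j <= N)%nat -> yv lam mu N p j t = p j t / (lam/mu)^j.
Proof. intros H; unfold yv. apply Nat.leb_le in H. rewrite H. reflexivity. Qed.

Lemma yv_SN lam mu N p t : yv lam mu N p (S N) t = 0.
Proof. unfold yv. replace (Nat.leb (S N) N) with false. reflexivity.
  symmetry; apply Nat.leb_gt; lia. Qed.

Lemma p_yv lam mu N p j t : 0 < lam -> 0 < mu -> (j <= N)%nat -> p j t = (lam/mu)^j * yv lam mu N p j t.
Proof. intros. rewrite yv_le; auto. assert (0 < (lam/mu)^j) by (apply rhok_pos; auto). field; lra. Qed.

Lemma flux_lt lam mu N p k t : 0 < lam -> 0 < mu -> (k < N)%nat ->
  flux lam mu N p k t = lam * p k t - mu * p (S k) t.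
Proof. intros Hl Hm Hk. unfold flux. rewrite !yv_le by lia.
  assert (0 < (lam/mu)^k) by (apply rhok_pos; auto).
  simpl pow. field. split; lra. Qed.

Lemma flux_N lam mu N p t : 0 < lam -> 0 < mu -> flux lam mu N p N t = lam * p N t.
Proof. intros Hl Hm. unfold flux. rewrite yv_SN, yv_le by lia.
  assert (0 < (lam/mu)^N) by (apply rhok_pos; auto). field; lra. Qed.

Lemma ode lam mu N p j t : Hyp lam mu N p -> (j <= N)%nat ->
  derivable_pt_lim (p j) t (Fm (fun k => flux lam mu N p k t) j - flux lam mu N p j t).
Proof. intros [Hl [Hm [HN [_ Hd]]]] Hj.
  specialize (Hd j t ltac:(lia)).
  match type of Hd with derivable_pt_lim _ _ ?v => replace (Fm _ j - _) with v; auto end.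
  unfold up_rate, down_rate.
  destruct j as [|i].
  - simpl Fm. rewrite flux_lt by (auto; lia).
    replace (Nat.ltb 0 (S N)) with true by (symmetry; apply Nat.ltb_lt; lia).
    replace (Nat.ltb 1 (S N)) with true by (symmetry; apply Nat.ltb_lt; lia).
    cbn [Nat.leb andb]. ring.
  - simpl Fm. rewrite flux_lt by (auto; lia).
    replace (Nat.ltb i (S N)) with true by (symmetry; apply Nat.ltb_lt; lia).
    replace (Nat.ltb (S i) (S N)) with true by (symmetry; apply Nat.ltb_lt; lia).
    destruct (Nat.eq_dec (S i) N) as [E|E].
    + subst N. rewrite flux_N by auto.
      replace (Nat.ltb (S (S i)) (S (S i))) with false by (symmetry; apply Nat.ltb_ge; lia).
      cbn [Nat.leb andb]. ring.
    + rewrite flux_lt by (auto; lia).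
      replace (Nat.ltb (S (S i)) (S N)) with true by (symmetry; apply Nat.ltb_lt; lia).
      cbn [Nat.leb andb]. ring.
Qed.

Lemma wsum_deriv lam mu N p (w : nat -> R) t : Hyp lam mu N p ->
  derivable_pt_lim (fun u => sumr (fun j => w j * p j u) (S N)) t
    (sumr (fun k => (w (S k) - w k) * flux lam mu N p k t) (S N) - w (S N) * flux lam mu N p N t).
Proof. intros H.
  replace (sumr _ (S N) - _) with
    (sumr (fun j => w j * (Fm (fun k => flux lam mu N p k t) j - flux lam mu N p j t)) (S N)).
  2:{ rewrite SBP. reflexivity. }
  apply sumr_deriv. intros j Hj.
  apply (derivable_pt_lim_scal (p j) (w j)). apply ode; auto; lia.
Qed.

Definition En lam mu N p t := sumr (fun j => p j t * yv lam mu N p j t) (S N).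
Definition Dv lam mu N p t := sumr (fun k => (lam/mu)^k * (yv lam mu N p k t - yv lam mu N p (S k) t)^2) (S N).

Lemma En_deriv lam mu N p t : Hyp lam mu N p ->
  derivable_pt_lim (En lam mu N p) t (-2 * lam * Dv lam mu N p t).
Proof. intros H. pose proof H as [Hl [Hm _]].
  replace (-2 * lam * Dv lam mu N p t) with
    (sumr (fun j => (2 * yv lam mu N p j t) * (Fm (fun k => flux lam mu N p k t) j - flux lam mu N p j t)) (S N)).
  2:{ rewrite SBP. simpl Fm. rewrite yv_SN. unfold Dv, flux.
      rewrite <- sumr_scal. rewrite Rmult_0_r, Rmult_0_l, Rminus_0_r.
      apply sumr_ext. intros; ring. }
  apply sumr_deriv. intros j Hj.
  assert (Hr : 0 < (lam/mu)^j) by (apply rhok_pos; auto).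
  apply (derivable_pt_lim_ext (fun u => / (lam/mu)^j * (p j u * p j u))).
  { intros z. rewrite yv_le by lia. field. lra. }
  replace (2 * yv lam mu N p j t * (Fm (fun k => flux lam mu N p k t) j - flux lam mu N p j t))
    with (/ (lam/mu)^j * ((Fm (fun k => flux lam mu N p k t) j - flux lam mu N p j t) * p j t + p j t * (Fm (fun k => flux lam mu N p k t) j - flux lam mu N p j t))).
  2:{ rewrite yv_le by lia. field. lra. }
  apply (derivable_pt_lim_scal (fun u => p j u * p j u)).
  apply (derivable_pt_lim_mult (p j) (p j)); apply ode; auto; lia.
Qed.

Lemma pow_le_1plus x k N : 0 < x -> (k <= N)%nat -> x ^ k <= 1 + x ^ N.
Proof. intros Hx Hk. destruct (Rle_dec x 1).
  - assert (x^k <= 1^k) by (apply pow_incr; lra). rewrite pow1 in H.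
    assert (0 <= x^N) by (apply pow_le; lra). lra.
  - assert (x^k <= x^N) by (apply Rle_pow; auto; lra). lra.
Qed.

Definition Cst lam mu N := (INR (S N))^2 * (1 + (lam/mu)^N) * (1 + (/(lam/mu))^N).

Lemma Cst_pos lam mu N : 0 < lam -> 0 < mu -> 0 < Cst lam mu N.
Proof. intros. unfold Cst. assert (0 < lam/mu) by (apply rho_pos; auto).
  assert (0 < INR (S N)) by (apply lt_0_INR; lia).
  assert (0 < (lam/mu)^N) by (apply pow_lt; auto).
  assert (0 < (/(lam/mu))^N) by (apply pow_lt, Rinv_0_lt_compat; auto).
  apply Rmult_lt_0_compat. apply Rmult_lt_0_compat. nra. lra. lra. Qed.

Lemma En_term lam mu N p j t : 0 < lam -> 0 < mu -> (j <= N)%nat ->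
  p j t * yv lam mu N p j t = (lam/mu)^j * (yv lam mu N p j t)^2.
Proof. intros. rewrite (p_yv lam mu N p j t) at 1; auto. ring. Qed.

Lemma En_nonneg_terms lam mu N p t k : 0 < lam -> 0 < mu -> (k < S N)%nat -> 0 <= p k t * yv lam mu N p k t.
Proof. intros. rewrite En_term by (auto; lia). apply Rmult_le_pos.
  left; apply rhok_pos; auto. apply pow2_ge_0. Qed.

Lemma poincare lam mu N p t : 0 < lam -> 0 < mu -> En lam mu N p t <= Cst lam mu N * Dv lam mu N p t.
Proof. intros Hl Hm. set (r := lam/mu). assert (Hr : 0 < r) by (apply rho_pos; auto).
  set (y := fun j => yv lam mu N p j t).
  set (Q := sumr (fun k => (y k - y (S k))^2) (S N)).
  assert (HQ : Q <= (1 + (/r)^N) * Dv lam mu N p t).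
  { unfold Q, Dv. rewrite <- sumr_scal. apply sumr_le. intros k Hk.
    fold r. fold (y k). fold (y (S k)).
    assert (Hk1 : (/r)^k <= 1 + (/r)^N) by (apply pow_le_1plus; [apply Rinv_0_lt_compat; auto | lia]).
    rewrite pow_inv in Hk1. assert (0 < r^k) by (apply pow_lt; auto).
    assert (1 <= (1 + (/r)^N) * r^k).
    { apply (Rmult_le_compat_r (r^k)) in Hk1; [|lra]. rewrite Rinv_l in Hk1; lra. }
    pose proof (pow2_ge_0 (y k - y (S k))). nra. }
  assert (Hy : forall j, (j <= N)%nat -> (y j)^2 <= INR (S N) * Q).
  { intros j Hj. assert (Hb := tele_bound y (S N) j ltac:(lia)).
    unfold y at 2 in Hb. rewrite yv_SN, Rminus_0_r in Hb. fold (y j) in Hb.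
    pose proof (CS (fun k => Rabs (y k - y (S k))) (S N)) as Hc.
    assert (Heq : sumr (fun k => Rabs (y k - y (S k)) ^ 2) (S N) = Q).
    { apply sumr_ext. intros. apply pow2_abs. }
    cbv beta in Hc. rewrite Heq in Hc. assert (y j ^2 = Rabs (y j) ^2) by (rewrite pow2_abs; auto).
    assert (0 <= Rabs (y j)) by apply Rabs_pos.
    assert (Rabs (y j) ^2 <= (sumr (fun k => Rabs (y k - y (S k))) (S N))^2) by (apply pow_incr; lra).
    lra. }
  unfold En. apply Rle_trans with (sumr (fun j => (1 + r^N) * (INR (S N) * Q)) (S N)).
  { apply sumr_le. intros j Hj. rewrite En_term by (auto; lia). fold r. fold (y j).
    assert (r^j <= 1 + r^N) by (apply pow_le_1plus; auto; lia).
    assert (y j ^2 <= INR (S N) * Q) by (apply Hy; lia).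
    assert (0 <= y j ^2) by apply pow2_ge_0. assert (0 < r^j) by (apply pow_lt; auto).
    apply Rle_trans with ((1 + r^N) * y j ^2). nra.
    apply Rmult_le_compat_l; auto. assert (0 < r^N) by (apply pow_lt; auto). lra. }
  rewrite sumr_scal. unfold Cst. fold r.
  assert (Hc : forall c m, sumr (fun _ => c) m = INR m * c).
  { intros c m; induction m; cbn [sumr]. simpl; ring. rewrite IHm, S_INR; ring. }
  rewrite Hc.
  assert (0 < INR (S N)) by (apply lt_0_INR; lia).
  assert (0 < r^N) by (apply pow_lt; auto).
  assert (0 <= Q) by (apply sumr_nonneg; intros; apply pow2_ge_0).
  match goal with |- ?L <= _ => replace L with ((INR (S N) ^ 2 * (1 + r ^ N)) * Q) by ring end.
  replace (INR (S N) ^ 2 * (1 + r ^ N) * (1 + (/ r) ^ N) * Dv lam mu N p t) with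
    ((INR (S N) ^ 2 * (1 + r ^ N)) * ((1 + (/ r) ^ N) * Dv lam mu N p t)) by ring.
  apply Rmult_le_compat_l; auto. nra.
Qed.

Lemma dexp c u : derivable_pt_lim (fun v => exp (c * v)) u (c * exp (c * u)).
Proof.
  replace (c * exp (c * u)) with (exp (c*u) * (c * 1)) by ring.
  apply (derivable_pt_lim_comp (fun v => c * v) exp).
  apply (derivable_pt_lim_scal id c). apply derivable_pt_lim_id.
  apply derivable_pt_lim_exp.
Qed.

Lemma init0 lam mu N p j : Hyp lam mu N p -> (j <= S N)%nat -> p j 0 = if Nat.eqb j 0 then 1 else 0.
Proof. intros [_ [_ [_ [H _]]]] Hj. apply H; auto. Qed.

Lemma En0 lam mu N p : Hyp lam mu N p -> En lam mu N p 0 = 1.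
Proof. intros H. pose proof H as [Hl [Hm _]]. unfold En. rewrite sumr_shift.
  rewrite (sumr_ext _ (fun _ => 0)).
  - assert (Hc : forall m, sumr (fun _ => 0) m = 0) by (induction m; cbn [sumr]; [auto| rewrite IHm; ring]).
    rewrite Hc. rewrite yv_le by lia. rewrite (init0 lam mu N p 0) by (auto; lia). simpl. field.
  - intros k Hk. rewrite (init0 lam mu N p (S k)) by (auto; lia). simpl. ring.
Qed.

Definition cdec lam mu N := 2 * lam / Cst lam mu N.

Lemma decay lam mu N p T : Hyp lam mu N p -> 0 <= T -> En lam mu N p T <= exp (- cdec lam mu N * T).
Proof. intros H HT. pose proof H as [Hl [Hm _]].
  set (c := cdec lam mu N). assert (HC := Cst_pos lam mu N Hl Hm).
  assert (Hc : c * Cst lam mu N = 2 * lam) by (unfold c, cdec; field; lra).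
  assert (Hm1 : En lam mu N p T * exp (c * T) <= En lam mu N p 0 * exp (c * 0)).
  { apply (nonincr (fun u => En lam mu N p u * exp (c * u))
      (fun u => -2 * lam * Dv lam mu N p u * exp (c*u) + En lam mu N p u * (c * exp (c*u)))); auto.
    - intros u _. apply (derivable_pt_lim_mult (En lam mu N p) (fun v => exp (c * v))).
      apply En_deriv; auto. apply dexp.
    - intros u _. pose proof (poincare lam mu N p u Hl Hm). pose proof (exp_pos (c*u)).
      assert (0 < c) by (unfold c, cdec; apply Rdiv_lt_0_compat; lra).
      assert (c * En lam mu N p u <= 2 * lam * Dv lam mu N p u) by (rewrite <- Hc; nra).
      nra. }
  rewrite En0, Rmult_0_r, exp_0, Rmult_1_r in Hm1 by auto.
  pose proof (exp_pos (c*T)).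
  replace (exp (- c * T)) with (/ exp (c * T)).
  2:{ replace (- c * T) with (- (c*T)) by ring. rewrite exp_Ropp. auto. }
  apply (Rmult_le_reg_r (exp (c*T))); auto. rewrite Rinv_l; lra.
Qed.

Lemma p_bound lam mu N p j T : Hyp lam mu N p -> 0 <= T -> (j <= N)%nat ->
  (p j T)^2 <= (lam/mu)^j * exp (- cdec lam mu N * T).
Proof. intros H HT Hj. pose proof H as [Hl [Hm _]].
  assert (Hterm : p j T * yv lam mu N p j T <= En lam mu N p T).
  { unfold En. apply (sumr_term_le (fun j => p j T * yv lam mu N p j T)). intros; apply En_nonneg_terms; auto. lia. }
  pose proof (decay lam mu N p T H HT).
  rewrite En_term in Hterm by auto.
  assert (0 < (lam/mu)^j) by (apply rhok_pos; auto).
  rewrite (p_yv lam mu N p j T) by auto.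
  replace (((lam / mu) ^ j * yv lam mu N p j T) ^ 2) with ((lam/mu)^j * ((lam / mu) ^ j * yv lam mu N p j T ^ 2)) by ring.
  apply Rmult_le_compat_l; lra.
Qed.

Lemma Rabs_le_inv x a : Rabs x <= a -> - a <= x /\ x <= a.
Proof. unfold Rabs. destruct (Rcase_abs x); lra. Qed.

Lemma sumr_tele y m : sumr (fun k => y k - y (S k)) m = y O - y m.
Proof. induction m; cbn [sumr]. ring. rewrite IHm; ring. Qed.

Lemma sumr_const0 m : sumr (fun _ => 0) m = 0.
Proof. induction m; cbn [sumr]. auto. rewrite IHm; ring. Qed.

Lemma surv_sumr N p t : survival (S N) p t = sumr (fun j => p j t) (S N).
Proof. unfold survival. replace (S N - 1)%nat with N by lia. apply sum_f_sumr. Qed.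

Lemma surv_deriv lam mu N p t : Hyp lam mu N p ->
  derivable_pt_lim (fun u => 1 - survival (S N) p u) t (lam * p N t).
Proof. intros H. pose proof H as [Hl [Hm _]].
  apply (derivable_pt_lim_ext (fun u => 1 - sumr (fun j => 1 * p j u) (S N))).
  { intros z. rewrite surv_sumr. f_equal. apply sumr_ext; intros; ring. }
  pose proof (wsum_deriv lam mu N p (fun _ => 1) t H) as Hd.
  rewrite (sumr_ext _ (fun _ => 0)) in Hd by (intros; ring).
  rewrite sumr_const0, flux_N in Hd by auto.
  replace (lam * p N t) with (0 - (0 - 1 * (lam * p N t))) by ring.
  apply (derivable_pt_lim_minus (fun _ => 1)). apply derivable_pt_lim_const. exact Hd.
Qed.

Lemma surv0 lam mu N p : Hyp lam mu N p -> survival (S N) p 0 = 1.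
Proof. intros H. rewrite surv_sumr, sumr_shift. rewrite (init0 lam mu N p 0) by (auto; lia).
  rewrite (sumr_ext _ (fun _ => 0)). rewrite sumr_const0. simpl; ring.
  intros k Hk. rewrite (init0 lam mu N p (S k)) by (auto; lia). reflexivity. Qed.

Definition Qf N r := sumr (fun k => r ^ (N - k)) (S N).
Definition hf N r j := 1 - sumr (fun k => r ^ (N - k)) j / Qf N r.
Definition kap lam N r := lam * r ^ N / Qf N r.

Lemma Qf_ge1 N r : 0 <= r -> 1 <= Qf N r.
Proof. intros Hr. unfold Qf. cbn [sumr]. rewrite Nat.sub_diag. simpl.
  assert (0 <= sumr (fun k => r ^ (N - k)) N) by (apply sumr_nonneg; intros; apply pow_le; auto). lra. Qed.

Lemma hf_bounds N r j : 0 <= r -> (j <= S N)%nat -> 0 <= hf N r j <= 1.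
Proof. intros Hr Hj. unfold hf. assert (HQ := Qf_ge1 N r Hr).
  assert (H0 : 0 <= sumr (fun k => r ^ (N - k)) j) by (apply sumr_nonneg; intros; apply pow_le; auto).
  assert (H1 : sumr (fun k => r ^ (N - k)) j <= Qf N r) by (apply sumr_mono; auto; intros; apply pow_le; auto).
  split.
  - assert (sumr (fun k => r ^ (N - k)) j / Qf N r <= 1).
    { unfold Rdiv. apply (Rmult_le_reg_r (Qf N r)). lra. rewrite Rmult_assoc, Rinv_l; lra. }
    lra.
  - assert (0 <= sumr (fun k => r ^ (N - k)) j / Qf N r) by (unfold Rdiv; apply Rmult_le_pos; [lra| left; apply Rinv_0_lt_compat; lra]). lra.
Qed.

Lemma hf0 N r : hf N r 0 = 1.
Proof. unfold hf. simpl. unfold Rdiv. ring. Qed.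

Lemma hfSN N r : 0 <= r -> hf N r (S N) = 0.
Proof. intros. unfold hf. fold (Qf N r). assert (HQ := Qf_ge1 N r H). field. lra. Qed.

Definition Vf lam mu N (p : nat -> R -> R) (t : R) := sumr (fun j => hf N (lam/mu) j * p j t) (S N).

Lemma V_deriv lam mu N p t : Hyp lam mu N p ->
  derivable_pt_lim (Vf lam mu N p) t (- kap lam N (lam/mu) * p O t).
Proof. intros H. pose proof H as [Hl [Hm _]]. set (r := lam/mu).
  assert (Hr : 0 < r) by (apply rho_pos; auto). assert (HQ := Qf_ge1 N r ltac:(lra)).
  pose proof (wsum_deriv lam mu N p (hf N r) t H) as Hd.
  rewrite hfSN, Rmult_0_l, Rminus_0_r in Hd by lra.
  rewrite (sumr_ext _ (fun k => - kap lam N r * (yv lam mu N p k t - yv lam mu N p (S k) t))) in Hd.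
  - rewrite sumr_scal, sumr_tele, yv_SN, yv_le in Hd by lia. simpl pow in Hd.
    replace (p 0%nat t / 1 - 0) with (p 0%nat t) in Hd by field. exact Hd.
  - intros k Hk. unfold hf, flux, kap. fold r. cbn [sumr].
    replace (r ^ N) with (r ^ (N - k) * r ^ k).
    2:{ rewrite <- pow_add. f_equal. lia. }
    field. lra.
Qed.

Lemma V0 lam mu N p : Hyp lam mu N p -> Vf lam mu N p 0 = 1.
Proof. intros H. unfold Vf. rewrite sumr_shift, hf0. rewrite (init0 lam mu N p 0) by (auto; lia).
  rewrite (sumr_ext _ (fun _ => 0)). rewrite sumr_const0. simpl; ring.
  intros k Hk. rewrite (init0 lam mu N p (S k)) by (auto; lia). simpl; ring. Qed.

Lemma pj_small lam mu N p j T : Hyp lam mu N p -> lam < mu -> 0 <= T -> (1 <= j <= N)%nat ->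
  Rabs (p j T) <= sqrt (lam/mu).
Proof. intros H Hlm HT Hj. pose proof H as [Hl [Hm _]].
  pose proof (p_bound lam mu N p j T H HT ltac:(lia)) as Hb.
  assert (Hr : 0 < lam/mu) by (apply rho_pos; auto).
  assert (Hr1 : lam/mu < 1) by (apply (Rmult_lt_reg_r mu); auto; unfold Rdiv; rewrite Rmult_assoc, Rinv_l; lra).
  assert (Hc : 0 < cdec lam mu N) by (unfold cdec; apply Rdiv_lt_0_compat; [lra| apply Cst_pos; auto]).
  assert (exp (- cdec lam mu N * T) <= 1).
  { rewrite <- exp_0. destruct (Req_dec T 0). subst; rewrite Rmult_0_r; lra.
    left; apply exp_increasing. nra. }
  assert ((lam/mu)^j <= lam/mu).
  { destruct j. lia. simpl. assert ((lam/mu)^j <= 1) by (rewrite <- (pow1 j); apply pow_incr; lra). nra. }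
  assert (p j T ^2 <= lam/mu).
  { assert (0 < (lam/mu)^j) by (apply pow_lt; auto). nra. }
  rewrite <- sqrt_Rsqr_abs. apply sqrt_le_1_alt. unfold Rsqr. simpl pow in *. lra.
Qed.

Lemma sumr_shift_bound f N b : (forall k, (k < N)%nat -> Rabs (f (S k)) <= b) ->
  Rabs (sumr f (S N) - f O) <= INR N * b.
Proof. intros Hb. rewrite sumr_shift. replace (f O + sumr (fun k => f (S k)) N - f O) with (sumr (fun k => f (S k)) N) by ring.
  apply sumr_bound. auto. Qed.

Lemma main_est lam mu N p T : Hyp lam mu N p -> lam < mu -> 0 <= T ->
  Rabs (survival (S N) p T - exp (- kap lam N (lam/mu) * T)) <= 2 * (INR N * sqrt (lam/mu)).
Proof. intros H Hlm HT. pose proof H as [Hl [Hm _]]. set (r := lam/mu). set (eta := INR N * sqrt r).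
  assert (Hr : 0 < r) by (apply rho_pos; auto).
  set (k := kap lam N r).
  assert (Hk : 0 < k) by (unfold k, kap; assert (HQ := Qf_ge1 N r ltac:(lra)); apply Rdiv_lt_0_compat; [apply Rmult_lt_0_compat; [lra| apply pow_lt; auto]|lra]).
  assert (Hsm : forall u, 0 <= u -> forall j, (1 <= j <= N)%nat -> Rabs (p j u) <= sqrt r) by (intros; apply (pj_small lam mu N); auto).
  assert (HV : forall u, 0 <= u -> Rabs (Vf lam mu N p u - p O u) <= eta).
  { intros u Hu. replace (Vf lam mu N p u - p O u) with (sumr (fun j => hf N r j * p j u) (S N) - hf N r O * p O u) by (unfold Vf; rewrite hf0; fold r; ring).
    unfold eta. apply (sumr_shift_bound (fun j => hf N r j * p j u)). intros j Hj.
    rewrite Rabs_mult. assert (Hh := hf_bounds N r (S j) ltac:(lra) ltac:(lia)).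
    rewrite Rabs_right by lra. assert (Rabs (p (S j) u) <= sqrt r) by (apply Hsm; auto; lia).
    assert (0 <= Rabs (p (S j) u)) by apply Rabs_pos. nra. }
  assert (HS : Rabs (survival (S N) p T - Vf lam mu N p T) <= eta).
  { rewrite surv_sumr. unfold Vf. fold r. rewrite <- sumr_minus.
    replace (sumr (fun k0 => p k0 T - hf N r k0 * p k0 T) (S N)) with
      (sumr (fun k0 => p k0 T - hf N r k0 * p k0 T) (S N) - (p O T - hf N r O * p O T)) by (rewrite hf0; ring).
    unfold eta. apply (sumr_shift_bound (fun k0 => p k0 T - hf N r k0 * p k0 T)). intros j Hj.
    replace (p (S j) T - hf N r (S j) * p (S j) T) with ((1 - hf N r (S j)) * p (S j) T) by ring.
    rewrite Rabs_mult. assert (Hh := hf_bounds N r (S j) ltac:(lra) ltac:(lia)).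
    rewrite Rabs_right by lra. assert (Rabs (p (S j) T) <= sqrt r) by (apply Hsm; auto; lia).
    assert (0 <= Rabs (p (S j) T)) by apply Rabs_pos. nra. }
  assert (Heta : 0 <= eta) by (unfold eta; apply Rmult_le_pos; [apply pos_INR| apply sqrt_pos]).
  assert (Hup : Vf lam mu N p T * exp (k*T) - eta * exp (k*T) <= Vf lam mu N p 0 * exp (k*0) - eta * exp (k*0)).
  { apply (nonincr (fun u => Vf lam mu N p u * exp (k*u) - eta * exp (k*u))
      (fun u => (- k * p O u) * exp (k*u) + Vf lam mu N p u * (k * exp (k*u)) - eta * (k * exp (k*u)))); auto.
    - intros u _. apply (derivable_pt_lim_minus (fun u => Vf lam mu N p u * exp (k*u)) (fun u => eta * exp (k*u))).
      apply (derivable_pt_lim_mult (Vf lam mu N p) (fun v => exp (k*v))). apply V_deriv; auto. apply dexp.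
      apply (derivable_pt_lim_scal (fun v => exp (k*v))). apply dexp.
    - intros u Hu. specialize (HV u ltac:(lra)). apply Rabs_le_inv in HV. pose proof (exp_pos (k*u)).
      assert (0 < k * exp (k*u)) by (apply Rmult_lt_0_compat; lra).
      replace (- k * p 0%nat u * exp (k * u) + Vf lam mu N p u * (k * exp (k * u)) - eta * (k * exp (k * u)))
        with ((k * exp (k*u)) * (Vf lam mu N p u - p 0%nat u - eta)) by ring.
      assert (Vf lam mu N p u - p 0%nat u - eta <= 0) by lra. nra. }
  assert (Hlo : - (Vf lam mu N p T * exp (k*T) + eta * exp (k*T)) <= - (Vf lam mu N p 0 * exp (k*0) + eta * exp (k*0))).
  { apply (nonincr (fun u => - (Vf lam mu N p u * exp (k*u) + eta * exp (k*u)))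
      (fun u => - ((- k * p O u) * exp (k*u) + Vf lam mu N p u * (k * exp (k*u)) + eta * (k * exp (k*u))))); auto.
    - intros u _. apply (derivable_pt_lim_opp (fun u => Vf lam mu N p u * exp (k*u) + eta * exp (k*u))).
      apply (derivable_pt_lim_plus (fun u => Vf lam mu N p u * exp (k*u)) (fun u => eta * exp (k*u))).
      apply (derivable_pt_lim_mult (Vf lam mu N p) (fun v => exp (k*v))). apply V_deriv; auto. apply dexp.
      apply (derivable_pt_lim_scal (fun v => exp (k*v))). apply dexp.
    - intros u Hu. specialize (HV u ltac:(lra)). apply Rabs_le_inv in HV. pose proof (exp_pos (k*u)).
      assert (0 < k * exp (k*u)) by (apply Rmult_lt_0_compat; lra).
      replace (- (- k * p 0%nat u * exp (k * u) + Vf lam mu N p u * (k * exp (k * u)) + eta * (k * exp (k * u))))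
        with (- ((k * exp (k*u)) * (Vf lam mu N p u - p 0%nat u + eta))) by ring.
      assert (Vf lam mu N p u - p 0%nat u + eta >= 0) by lra. nra. }
  rewrite V0, Rmult_0_r, exp_0 in Hup, Hlo by auto.
  assert (HE : exp (- k * T) * exp (k * T) = 1).
  { rewrite <- exp_plus. replace (- k * T + k * T) with 0 by ring. apply exp_0. }
  assert (H1 : exp (k*T) >= 1).
  { rewrite <- exp_0. destruct (Req_dec T 0). subst. rewrite Rmult_0_r. lra. left. apply exp_increasing. nra. }
  assert (H2 : 0 < exp (-k*T)) by apply exp_pos.
  assert (HVT : Rabs (Vf lam mu N p T - exp (- k * T)) <= eta).
  { apply Rabs_le. split.
    - assert ((Vf lam mu N p T - exp (-k*T) + eta) * exp (k*T) >= 0) by nra.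
      assert (Vf lam mu N p T - exp (-k*T) + eta >= 0).
      { destruct (Rle_dec 0 (Vf lam mu N p T - exp (-k*T) + eta)). lra. nra. }
      lra.
    - assert ((Vf lam mu N p T - exp (-k*T) - eta) * exp (k*T) <= 0) by nra.
      assert (Vf lam mu N p T - exp (-k*T) - eta <= 0).
      { destruct (Rle_dec (Vf lam mu N p T - exp (-k*T) - eta) 0). lra. nra. }
      lra. }
  replace (survival (S N) p T - exp (- k * T)) with
    ((survival (S N) p T - Vf lam mu N p T) + (Vf lam mu N p T - exp (-k*T))) by ring.
  eapply Rle_trans. apply Rabs_triang. lra.
Qed.

Fixpoint uU (N : nat) (a r : R) (k : nat) : R * R :=
  match k with
  | O => (1, 1)
  | S k => (fst (uU N a r k) + a * r ^ (N - k) * snd (uU N a r k),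
            snd (uU N a r k) + (fst (uU N a r k) + a * r ^ (N - k) * snd (uU N a r k)) * r ^ (S k))
  end.
Definition uf N a r k := fst (uU N a r k).
Definition Uf N a r k := snd (uU N a r k).

Lemma uf_S N a r k : uf N a r (S k) = uf N a r k + a * r ^ (N - k) * Uf N a r k.
Proof. reflexivity. Qed.
Lemma Uf_S N a r k : Uf N a r (S k) = Uf N a r k + uf N a r (S k) * r ^ (S k).
Proof. reflexivity. Qed.
Lemma uf_0 N a r : uf N a r 0 = 1. Proof. reflexivity. Qed.
Lemma Uf_0 N a r : Uf N a r 0 = 1. Proof. reflexivity. Qed.

Lemma uf_pos N a r k : 0 <= a -> 0 <= r -> 1 <= uf N a r k /\ 0 <= Uf N a r k.
Proof. intros Ha Hr. induction k. rewrite uf_0, Uf_0; lra.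
  destruct IHk as [H1 H2]. assert (0 <= r ^ (N - k)) by (apply pow_le; auto).
  assert (0 <= r ^ (S k)) by (apply pow_le; auto).
  assert (0 <= a * r ^ (N - k) * Uf N a r k) by (apply Rmult_le_pos; auto; apply Rmult_le_pos; auto).
  rewrite Uf_S, uf_S. split. lra. apply Rplus_le_le_0_compat; auto. apply Rmult_le_pos; lra. Qed.

Lemma uf_at0 N a k : (k <= N)%nat -> uf N a 0 k = 1 /\ Uf N a 0 k = 1.
Proof. induction k; intros Hk. auto. destruct IHk as [H1 H2]. lia.
  rewrite Uf_S, uf_S, H1, H2. rewrite pow_i by lia. replace (0 ^ (S k)) with 0 by (simpl; ring). split; ring. Qed.

Lemma uf_at0_SN N a : uf N a 0 (S N) = 1 + a.
Proof. rewrite uf_S. destruct (uf_at0 N a N ltac:(lia)) as [H1 H2]. rewrite H1, H2, Nat.sub_diag. simpl; ring. Qed.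

Lemma cpt_d f x l : derivable_pt_lim f x l -> continuity_pt f x.
Proof. intros H. apply derivable_continuous_pt. exists l. exact H. Qed.

Lemma cpt_pow n x : continuity_pt (fun y => y ^ n) x.
Proof. apply (cpt_d _ _ _ (derivable_pt_lim_pow x n)). Qed.

Lemma cpt_plus f g x : continuity_pt f x -> continuity_pt g x -> continuity_pt (fun y => f y + g y) x.
Proof. intros; apply (continuity_pt_plus f g); auto. Qed.
Lemma cpt_minus f g x : continuity_pt f x -> continuity_pt g x -> continuity_pt (fun y => f y - g y) x.
Proof. intros; apply (continuity_pt_minus f g); auto. Qed.
Lemma cpt_mult f g x : continuity_pt f x -> continuity_pt g x -> continuity_pt (fun y => f y * g y) x.
Proof. intros; apply (continuity_pt_mult f g); auto. Qed.
Lemma cpt_const c x : continuity_pt (fun _ => c) x.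
Proof. apply continuity_pt_const. intros a b; auto. Qed.
Lemma cpt_inv f x : continuity_pt f x -> f x <> 0 -> continuity_pt (fun y => / f y) x.
Proof. intros; apply (continuity_pt_inv f); auto. Qed.
Lemma cpt_comp f h x : continuity_pt f x -> continuity_pt h (f x) -> continuity_pt (fun y => h (f y)) x.
Proof. intros; apply (continuity_pt_comp f h); auto. Qed.

Lemma continuity_pt_ext g f x : (forall y, g y = f y) -> continuity_pt g x -> continuity_pt f x.
Proof. intros H. replace f with g; auto. apply functional_extensionality; auto. Qed.

Lemma uf_cont N a k x : continuity_pt (fun r => uf N a r k) x /\ continuity_pt (fun r => Uf N a r k) x.
Proof. induction k. split; apply (continuity_pt_ext (fun _ => 1)); auto; apply cpt_const.
  destruct IHk as [H1 H2].
  assert (Hu : continuity_pt (fun r => uf N a r (S k)) x).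
  { apply (continuity_pt_ext (fun r => uf N a r k + (a * r ^ (N - k)) * Uf N a r k)).
    - intros; rewrite uf_S; ring.
    - apply cpt_plus; auto. apply cpt_mult; auto. apply cpt_mult. apply cpt_const. apply cpt_pow. }
  split; auto.
  apply (continuity_pt_ext (fun r => Uf N a r k + uf N a r (S k) * r ^ (S k))).
  - intros; rewrite Uf_S; ring.
  - apply cpt_plus; auto. apply cpt_mult; auto. apply cpt_pow.
Qed.

Lemma mk_pr f : continuity f -> forall b, Riemann_integrable f 0 b.
Proof. intros Hc b. destruct (Rle_dec 0 b) as [h|h].
  apply continuity_implies_RiemannInt; auto.
  apply RiemannInt_P1. apply continuity_implies_RiemannInt; auto. lra. Qed.

Lemma tail K al eps : 0 <= K -> 0 < al -> 0 < eps -> exists B, 0 <= B /\ forall b, B <= b -> K * exp (- al * b) < eps.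
Proof. intros HK Hal He. set (x := (K + 1) / eps).
  assert (Hx : 0 < x) by (unfold x; apply Rdiv_lt_0_compat; lra).
  exists (Rmax 0 (ln x / al)). split. apply Rmax_l. intros b Hb.
  assert (Hb2 : ln x / al <= b) by (eapply Rle_trans; [apply Rmax_r| exact Hb]).
  assert (ln x <= al * b).
  { apply (Rmult_le_compat_l al) in Hb2; [|lra]. unfold Rdiv in Hb2.
    replace (al * (ln x * / al)) with (ln x) in Hb2 by (field; lra). lra. }
  assert (exp (- al * b) <= / x).
  { rewrite <- (exp_ln x Hx). rewrite <- exp_Ropp. destruct (Req_dec (-al*b) (- ln x)). rewrite H0; lra.
    left; apply exp_increasing; lra. }
  assert (/ x = eps / (K + 1)) by (unfold x; field; lra).
  assert (K * exp (- al * b) <= K * (eps / (K+1))) by (apply Rmult_le_compat_l; lra).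
  assert (K * (eps / (K + 1)) < eps).
  { apply (Rmult_lt_reg_r (K+1)). lra. replace (K * (eps / (K + 1)) * (K + 1)) with (K * eps) by (field; lra). nra. }
  lra.
Qed.

Definition rr lam mu := lam / mu.
Definition gfun lam mu N s j := uf N (s/lam) (lam/mu) j / (lam * uf N (s/lam) (lam/mu) (S N)).
Definition Wf lam mu N s (p : nat -> R -> R) (t : R) := sumr (fun j => gfun lam mu N s j * p j t) (S N).

Lemma C_diff N a r j : Uf N a r j - Fm (Uf N a r) j = uf N a r j * r ^ j.
Proof. destruct j. simpl. rewrite Uf_0, uf_0. ring. simpl Fm. rewrite Uf_S. ring. Qed.

Lemma Wf_abel lam mu N s p t : Hyp lam mu N p ->
  Wf lam mu N s p t = / (lam * uf N (s/lam) (lam/mu) (S N)) *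
     sumr (fun k => Uf N (s/lam) (lam/mu) k * (yv lam mu N p k t - yv lam mu N p (S k) t)) (S N).
Proof. intros H. pose proof H as [Hl [Hm _]]. unfold Wf, gfun.
  set (a := s/lam). set (r := lam/mu). set (C := Uf N a r). set (y := fun j => yv lam mu N p j t).
  rewrite (sumr_ext _ (fun j => / (lam * uf N a r (S N)) * ((C j - Fm C j) * y j))).
  2:{ intros j Hj. unfold C. rewrite C_diff. unfold y. rewrite (p_yv lam mu N p j t) by (auto; lia).
      fold r. unfold Rdiv. ring. }
  rewrite sumr_scal. f_equal.
  pose proof (SBP y C (S N)) as E. replace (y (S N)) with 0 in E by (unfold y; rewrite yv_SN; auto).
  rewrite (sumr_ext (fun j => (C j - Fm C j) * y j) (fun j => - (y j * (Fm C j - C j)))) by (intros; ring).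
  rewrite (sumr_ext (fun k => C k * (yv lam mu N p k t - yv lam mu N p (S k) t)) (fun k => - ((y (S k) - y k) * C k))) by (intros; unfold y; ring).
  assert (Hn : forall f m, sumr (fun j => - f j) m = - sumr f m).
  { intros f m. rewrite (sumr_ext _ (fun j => -1 * f j)) by (intros; ring). rewrite sumr_scal. ring. }
  rewrite !Hn, E. ring.
Qed.

Lemma W_deriv lam mu N s p t : Hyp lam mu N p -> 0 <= s ->
  derivable_pt_lim (Wf lam mu N s p) t (s * (lam/mu)^N * Wf lam mu N s p t - p N t).
Proof. intros H Hs. pose proof H as [Hl [Hm _]].
  set (a := s/lam). set (r := lam/mu).
  assert (Hr : 0 < r) by (apply rho_pos; auto). assert (Ha : 0 <= a) by (unfold a; apply Rmult_le_pos; [lra| left; apply Rinv_0_lt_compat; lra]).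
  assert (Hu := uf_pos N a r (S N) Ha ltac:(lra)).
  pose proof (wsum_deriv lam mu N p (gfun lam mu N s) t H) as Hd. unfold Wf.
  match type of Hd with derivable_pt_lim _ _ ?v => replace (s * (lam/mu)^N * _ - p N t) with v; auto end.
  rewrite flux_N by auto.
  replace (gfun lam mu N s (S N) * (lam * p N t)) with (p N t).
  2:{ unfold gfun. fold a r. field. lra. }
  f_equal. fold (Wf lam mu N s p t). rewrite Wf_abel by auto. fold a r.
  rewrite <- sumr_scal, <- sumr_scal. apply sumr_ext. intros k Hk.
  unfold gfun, flux. fold a r. rewrite uf_S.
  replace (r ^ N) with (r ^ (N - k) * r ^ k) by (rewrite <- pow_add; f_equal; lia).
  unfold a in *. field. split; lra.
Qed.

Lemma pj_decay lam mu N p j b : Hyp lam mu N p -> 0 <= b -> (j <= N)%nat ->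
  Rabs (p j b) <= sqrt ((lam/mu)^j) * exp (- (cdec lam mu N / 2) * b).
Proof. intros H Hb Hj. pose proof H as [Hl [Hm _]].
  pose proof (p_bound lam mu N p j b H Hb Hj) as Hp.
  assert (0 < (lam/mu)^j) by (apply rhok_pos; auto).
  assert (E : (sqrt ((lam/mu)^j) * exp (- (cdec lam mu N / 2) * b))^2 = (lam/mu)^j * exp (- cdec lam mu N * b)).
  { rewrite Rpow_mult_distr. simpl pow. rewrite !Rmult_1_r. rewrite sqrt_sqrt by lra.
    rewrite <- exp_plus. replace (- (cdec lam mu N / 2) * b + - (cdec lam mu N / 2) * b) with (- cdec lam mu N * b) by field. reflexivity. }
  rewrite <- E in Hp.
  assert (0 <= sqrt ((lam/mu)^j) * exp (- (cdec lam mu N / 2) * b)) by (apply Rmult_le_pos; [apply sqrt_pos| left; apply exp_pos]).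
  rewrite <- (Rabs_right (sqrt ((lam/mu)^j) * exp (- (cdec lam mu N / 2) * b))) by lra.
  apply Rsqr_le_abs_0. unfold Rsqr. simpl pow in Hp. lra.
Qed.

Lemma laplace_core lam mu N s p (f : R -> R) c sg : Hyp lam mu N p -> 0 <= s -> sg = s * (lam/mu)^N ->
  (forall t, f t = exp (- sg * t) * (c * p N t)) ->
  improper_int0 f (c / (lam * uf N (s/lam) (lam/mu) (S N))).
Proof. intros H Hs Hsg Hf. pose proof H as [Hl [Hm _]].
  set (us := uf N (s/lam) (lam/mu) (S N)).
  assert (Ha : 0 <= s/lam) by (apply Rmult_le_pos; [lra| left; apply Rinv_0_lt_compat; lra]).
  assert (Hr : 0 < lam/mu) by (apply rho_pos; auto).
  assert (Hus : 1 <= us) by (apply uf_pos; lra).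
  assert (Hsg0 : 0 <= sg) by (rewrite Hsg; apply Rmult_le_pos; auto; left; apply pow_lt; auto).
  set (W := Wf lam mu N s p).
  set (Ant := fun t => - c * (exp (- sg * t) * W t)).
  assert (Hd : forall t, derivable_pt_lim Ant t (f t)).
  { intros t. rewrite Hf. unfold Ant.
    replace (exp (- sg * t) * (c * p N t)) with (- c * ((- sg * exp (- sg * t)) * W t + exp (- sg * t) * (s * (lam/mu)^N * W t - p N t))) by (rewrite Hsg; ring).
    apply (derivable_pt_lim_scal (fun t => exp (- sg * t) * W t)).
    apply (derivable_pt_lim_mult (fun t => exp (- sg * t)) W). apply dexp. apply W_deriv; auto. }
  assert (Hc : continuity f).
  { intros x. apply (continuity_pt_ext (fun t => exp (- sg * t) * (c * p N t))). intros; auto.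
    apply cpt_mult. apply (cpt_d _ _ _ (dexp (-sg) x)).
    apply cpt_mult. apply cpt_const. apply (cpt_d _ _ _ (ode lam mu N p N x H ltac:(lia))). }
  exists (mk_pr f Hc). intros eps Heps.
  set (Gm := sumr (fun j => Rabs (gfun lam mu N s j) * sqrt ((lam/mu)^j)) (S N)).
  assert (HGm : 0 <= Gm) by (apply sumr_nonneg; intros; apply Rmult_le_pos; [apply Rabs_pos| apply sqrt_pos]).
  assert (Hcd : 0 < cdec lam mu N) by (unfold cdec; apply Rdiv_lt_0_compat; [lra| apply Cst_pos; auto]).
  destruct (tail (Rabs c * (INR (S N) * Gm)) (cdec lam mu N / 2) eps) as [B [HB0 HB]]; auto.
  { apply Rmult_le_pos. apply Rabs_pos. apply Rmult_le_pos; auto. apply pos_INR. }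
  { lra. }
  exists B. intros b Hb.
  rewrite (FTC f Ant b (mk_pr f Hc b) Hd Hc).
  assert (HW0 : W 0 = / (lam * us)).
  { unfold W, Wf. rewrite sumr_shift. rewrite (init0 lam mu N p 0) by (auto; lia).
    rewrite (sumr_ext _ (fun _ => 0)). rewrite sumr_const0. unfold gfun. fold us. rewrite uf_0. simpl. field. lra.
    intros k Hk. rewrite (init0 lam mu N p (S k)) by (auto; lia). simpl; ring. }
  assert (HWb : Rabs (W b) <= INR (S N) * (Gm * exp (- (cdec lam mu N / 2) * b))).
  { unfold W, Wf. apply sumr_bound. intros j Hj. rewrite Rabs_mult.
    assert (Rabs (p j b) <= sqrt ((lam/mu)^j) * exp (- (cdec lam mu N / 2) * b)) by (apply pj_decay; [auto | lra | lia]).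
    assert (Rabs (gfun lam mu N s j) * sqrt ((lam/mu)^j) <= Gm).
    { unfold Gm. apply (sumr_term_le (fun j => Rabs (gfun lam mu N s j) * sqrt ((lam/mu)^j))); auto.
      intros; apply Rmult_le_pos; [apply Rabs_pos| apply sqrt_pos]. }
    pose proof (exp_pos (- (cdec lam mu N / 2) * b)).
    pose proof (Rabs_pos (gfun lam mu N s j)).
    apply Rle_trans with (Rabs (gfun lam mu N s j) * (sqrt ((lam / mu) ^ j) * exp (- (cdec lam mu N / 2) * b))).
    apply Rmult_le_compat_l; auto. nra. }
  unfold Ant. rewrite Rmult_0_r, exp_0, Rmult_1_l, HW0.
  replace (- c * (exp (- sg * b) * W b) - - c * / (lam * us) - c / (lam * us)) with (- c * (exp (- sg * b) * W b)) by (field; lra).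
  rewrite Rabs_mult, Rabs_Ropp, Rabs_mult.
  assert (He : exp (- sg * b) <= 1).
  { rewrite <- exp_0. destruct (Req_dec (sg * b) 0). replace (- sg * b) with 0 by lra. lra. left; apply exp_increasing. nra. }
  rewrite (Rabs_right (exp (- sg * b))) by (left; apply exp_pos).
  specialize (HB b Hb).
  assert (0 <= Rabs (W b)) by apply Rabs_pos. pose proof (Rabs_pos c). pose proof (exp_pos (- sg * b)).
  apply Rle_lt_trans with (Rabs c * Rabs (W b)). apply Rmult_le_compat_l; auto. nra.
  apply Rle_lt_trans with (Rabs c * (INR (S N) * (Gm * exp (- (cdec lam mu N / 2) * b)))).
  apply Rmult_le_compat_l; auto. replace (Rabs c * (INR (S N) * (Gm * exp (- (cdec lam mu N / 2) * b)))) with (Rabs c * (INR (S N) * Gm) * exp (- (cdec lam mu N / 2) * b)) by ring. auto.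
Qed.

Lemma lim_from_cont lam B g l M0 : 0 < lam -> 0 <= M0 -> continuity_pt B 0 -> B 0 = 0 ->
  (forall mu, M0 < mu -> Rabs (g mu - l) <= B (lam/mu)) -> lim_mu_infty g l.
Proof. intros Hl HM Hc HB0 Hb eps Heps.
  unfold continuity_pt, continue_in, limit1_in, limit_in in Hc.
  destruct (Hc eps Heps) as [alp [Halp Hx]].
  exists (Rmax M0 (lam / alp)). intros mu Hmu.
  assert (HM0 : M0 < mu) by (eapply Rle_lt_trans; [apply Rmax_l| exact Hmu]).
  assert (Hm1 : lam / alp < mu) by (eapply Rle_lt_trans; [apply Rmax_r| exact Hmu]).
  assert (Hmu0 : 0 < mu) by lra.
  assert (Hr : lam / mu < alp).
  { apply (Rmult_lt_reg_r mu); auto. unfold Rdiv. rewrite Rmult_assoc, Rinv_l by lra.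
    apply (Rmult_lt_compat_l alp) in Hm1; auto. unfold Rdiv in Hm1.
    replace (alp * (lam * / alp)) with lam in Hm1 by (field; lra). lra. }
  assert (Hr0 : 0 < lam / mu) by (apply Rdiv_lt_0_compat; auto).
  specialize (Hx (lam/mu)). simpl in Hx. unfold R_dist in Hx.
  rewrite HB0, Rminus_0_r, Rminus_0_r in Hx.
  assert (Rabs (B (lam/mu)) < eps).
  { apply Hx. split. unfold D_x, no_cond. split; auto. lra. rewrite Rabs_right; lra. }
  specialize (Hb mu HM0). apply Rle_lt_trans with (B (lam/mu)); auto.
  eapply Rle_lt_trans. apply RRle_abs. auto.
Qed.

Lemma cpt_sumr fs m x : (forall k, (k < m)%nat -> continuity_pt (fs k) x) ->
  continuity_pt (fun y => sumr (fun k => fs k y) m) x.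
Proof. induction m; intros H. cbn [sumr]. apply cpt_const.
  cbn [sumr]. apply cpt_plus. apply IHm; auto. apply H; lia. Qed.

Lemma Qf_at0 N : Qf N 0 = 1.
Proof. unfold Qf. cbn [sumr]. rewrite Nat.sub_diag. rewrite (sumr_ext _ (fun _ => 0)).
  rewrite sumr_const0. simpl; ring. intros k Hk. apply pow_i. lia. Qed.

Lemma cpt_exp f x : continuity_pt f x -> continuity_pt (fun y => exp (f y)) x.
Proof. intros H. apply cpt_comp; auto. apply (cpt_d _ _ _ (derivable_pt_lim_exp (f x))). Qed.

Lemma cpt_abs f x : continuity_pt f x -> continuity_pt (fun y => Rabs (f y)) x.
Proof. intros H. apply cpt_comp; auto. apply Rcontinuity_abs. Qed.

Theorem mainTheorem1 (n : nat) (lam : R) (P : R -> nat -> R -> R)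
  (Hn : (2 <= n)%nat) (Hlam : 0 < lam)
  (HP : forall mu, 0 < mu -> kolmogorov_forward lam mu n (P mu)) :
  (* P((lam/mu)^(n-1) tau > t) -> exp(-lam t) *)
  (forall t, 0 <= t ->
     lim_mu_infty (fun mu => survival n (P mu) (t / scale lam mu n)) (exp (- lam * t)))
  /\
  (* lam * P_{n-1} is the density of tau *)
  (forall mu, 0 < mu ->
     survival n (P mu) 0 = 1 /\
     forall t, 0 < t ->
       derivable_pt_lim (fun u => 1 - survival n (P mu) u) t (lam * P mu (n - 1)%nat t))
  /\
  (* E exp(-s (lam/mu)^(n-1) tau) -> lam/(lam+s) *)
  (forall s, 0 <= s -> exists L : R -> R,
     (forall mu, 0 < mu ->
        improper_int0 (fun t => exp (- (s * scale lam mu n) * t) * (lam * P mu (n - 1)%nat t)) (L mu))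
     /\ lim_mu_infty L (lam / (lam + s)))
  /\
  (* phi_{n-1}((lam/mu)^(n-1) s) -> 1/(lam+s) *)
  (forall s, 0 <= s -> exists Phi : R -> R,
     (forall mu, 0 < mu ->
        improper_int0 (fun t => exp (- (scale lam mu n * s) * t) * P mu (n - 1)%nat t) (Phi mu))
     /\ lim_mu_infty Phi (1 / (lam + s))).
Proof.
  destruct n as [|N]. lia.
  assert (HN : (1 <= N)%nat) by lia.
  assert (Hy : forall mu, 0 < mu -> Hyp lam mu N (P mu)) by (intros mu Hm; unfold Hyp; split; [|split; [|split]]; auto).
  assert (EN : (S N - 1)%nat = N) by lia.
  unfold scale. rewrite EN.
  split; [|split; [|split]].
  - intros t Ht.
    apply (lim_from_cont lam (fun r => 2 * (INR N * sqrt r) + Rabs (exp (- lam * t / Qf N r) - exp (- lam * t))) _ _ lam); auto; try lra.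
    + apply cpt_plus. apply cpt_mult. apply cpt_const. apply cpt_mult. apply cpt_const.
      apply continuity_pt_sqrt; lra.
      apply cpt_abs. apply cpt_minus. 2: apply cpt_const.
      apply cpt_exp. apply (continuity_pt_ext (fun r => (- lam * t) * / Qf N r)). intros; unfold Rdiv; auto.
      apply cpt_mult. apply cpt_const. apply cpt_inv.
      unfold Qf. apply cpt_sumr. intros; apply cpt_pow. rewrite Qf_at0; lra.
    + rewrite sqrt_0, Qf_at0. replace (- lam * t / 1) with (- lam * t) by field.
      rewrite Rminus_diag, Rabs_R0. ring.
    + intros mu Hmu. assert (Hm : 0 < mu) by lra. assert (H := Hy mu Hm).
      assert (Hr : 0 < lam/mu) by (apply rho_pos; auto).
      assert (Hlm : lam < mu) by lra.
      assert (HT : 0 <= t / (lam/mu)^N) by (apply Rmult_le_pos; auto; left; apply Rinv_0_lt_compat, pow_lt; auto).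
      pose proof (main_est lam mu N (P mu) (t / (lam/mu)^N) H Hlm HT) as Hm1.
      assert (HQ := Qf_ge1 N (lam/mu) ltac:(lra)).
      assert (Hpw : 0 < (lam/mu)^N) by (apply pow_lt; auto).
      replace (- kap lam N (lam/mu) * (t / (lam/mu)^N)) with (- lam * t / Qf N (lam/mu)) in Hm1 by (unfold kap; field; lra).
      replace (survival (S N) (P mu) (t / (lam / mu) ^ N) - exp (- lam * t)) with
        ((survival (S N) (P mu) (t / (lam / mu) ^ N) - exp (- lam * t / Qf N (lam/mu))) + (exp (- lam * t / Qf N (lam/mu)) - exp (- lam * t))) by ring.
      eapply Rle_trans. apply Rabs_triang. lra.
  - intros mu Hm. assert (H := Hy mu Hm). split. apply (surv0 lam mu); auto.
    intros t Ht. apply (surv_deriv lam mu); auto.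
  - intros s Hs. exists (fun mu => lam / (lam * uf N (s/lam) (lam/mu) (S N))). split.
    + intros mu Hm. apply (laplace_core lam mu N s (P mu) _ lam (s * (lam/mu)^N)); auto.
    + apply (lim_from_cont lam (fun r => Rabs (lam * / (lam * uf N (s/lam) r (S N)) - lam / (lam + s))) _ _ 0); auto; try lra.
      * apply cpt_abs. apply cpt_minus. 2: apply cpt_const. apply cpt_mult. apply cpt_const.
        apply cpt_inv. apply cpt_mult. apply cpt_const. apply uf_cont.
        rewrite uf_at0_SN. replace (lam * (1 + s/lam)) with (lam + s) by (field; lra). lra.
      * rewrite uf_at0_SN. replace (lam * (1 + s/lam)) with (lam + s) by (field; lra).
        unfold Rdiv. rewrite Rminus_diag, Rabs_R0. auto.
      * intros mu Hm. unfold Rdiv at 1. lra.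
  - intros s Hs. exists (fun mu => 1 / (lam * uf N (s/lam) (lam/mu) (S N))). split.
    + intros mu Hm. apply (laplace_core lam mu N s (P mu) _ 1 ((lam/mu)^N * s)); auto. ring.
      intros t. ring.
    + apply (lim_from_cont lam (fun r => Rabs (1 * / (lam * uf N (s/lam) r (S N)) - 1 / (lam + s))) _ _ 0); auto; try lra.
      * apply cpt_abs. apply cpt_minus. 2: apply cpt_const. apply cpt_mult. apply cpt_const.
        apply cpt_inv. apply cpt_mult. apply cpt_const. apply uf_cont.
        rewrite uf_at0_SN. replace (lam * (1 + s/lam)) with (lam + s) by (field; lra). lra.
      * rewrite uf_at0_SN. replace (lam * (1 + s/lam)) with (lam + s) by (field; lra).
        unfold Rdiv. rewrite Rminus_diag, Rabs_R0. auto.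
      * intros mu Hm. unfold Rdiv at 1. lra.
Qed.
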